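(* Let $J_1,J_2,k_1,k_2,h,E_1,E_2>0$ and $T_s>0$, and consider the batch reactor system $$\dot c_A=-k_1e^{-E_1/T}c_A,\quad \dot c_B=k_1e^{-E_1/T}c_A-k_2e^{-E_2/T}c_B,\quad \dot T=J_1k_1e^{-E_1/T}c_A+J_2k_2e^{-E_2/T}c_B+h(T_s-T),$$ with output $T$, on the state set $D\times\Omega$ where $D=(0,\bar c_A)\times(0,\bar c_B)$, $\Omega=(T_{\min},T_{\max})$, and the constants satisfy $\bar c_A>0$, $0<T_{\min}\le T_s$, $\frac{k_1}{k_2}\bar c_A<\bar c_B$ if $E_1\ge E_2$ and $\frac{k_1}{k_2}e^{(E_2-E_1)/T_{\min}}\bar c_A<\bar c_B$ if $E_1<E_2$, and $\frac{J_1k_1\bar c_A+J_2k_2\bar c_B}{h}+T_s\le T_{\max}$. (Then $D\times\Omega$ is positively invariant and solutions exist and are unique for all $t\ge0$.) Assume one of the following: (A1) if $E_1=E_2$ then $(J_1+J_2)k_2\ne J_1k_1$; if $E_1\ne E_2$ then there exists $a>0$ such that for all $T\in(T_{\min},T_{\max})$ with $\frac{T^2}{(E_2-E_1)J_1h}e^{-E_2/T}\big[(J_1+J_2)k_2-J_1k_1e^{(E_2-E_1)/T}\big]+T>T_s$ one has $\frac{T^2}{(E_2-E_1)J_1}e^{-E_2/T}\big[(J_1+J_2)k_2-J_1k_1e^{(E_2-E_1)/T}\big]\le -a$; (A2) the same as (A1) but with the last inequality replaced by $\frac{T^2}{(E_2-E_1)J_1}e^{-E_2/T}\big[(J_1+J_2)k_2-J_1k_1e^{(E_2-E_1)/T}\big]\ge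 a$. Then the system is strongly observable in time $r$ for every $r>0$ if $E_1=E_2$, and for every $r\ge\frac{T_{\max}-T_{\min}}{a}$ if $E_1\ne E_2$; that is, for any two distinct initial states in $D\times\Omega$, the corresponding temperature outputs $T(\cdot)$ differ at some time in $[0,r]$.
   Context: Strong observability in time $r$ here means: for every pair of initial states $(c_{A,0},c_{B,0},T_0)\neq(\tilde c_{A,0},\tilde c_{B,0},\tilde T_0)$ in $D\times\Omega$, $\max_{t\in[0,r]}|T(t)-\tilde T(t)|>0$, where $T(\cdot),\tilde T(\cdot)$ are the temperature components of the corresponding solutions (the system has no control input). *)

(* Defs.v *)
From Stdlib Require Import Reals Lra.
From Coquelicot Require Import Coquelicot.
Open Scope R_scope.

Definition f_cA (k1 E1 cA T : R) : R := - k1 * exp (- E1 / T) * cA.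
Definition f_cB (k1 k2 E1 E2 cA cB T : R) : R :=
  k1 * exp (- E1 / T) * cA - k2 * exp (- E2 / T) * cB.
Definition f_T (J1 J2 k1 k2 h E1 E2 Ts cA cB T : R) : R :=
  J1 * k1 * exp (- E1 / T) * cA + J2 * k2 * exp (- E2 / T) * cB + h * (Ts - T).

Definition is_solution (J1 J2 k1 k2 h E1 E2 Ts : R) (cA cB T : R -> R) : Prop :=
  (forall t, 0 < t ->
      is_derive cA t (f_cA k1 E1 (cA t) (T t)) /\
      is_derive cB t (f_cB k1 k2 E1 E2 (cA t) (cB t) (T t)) /\
      is_derive T t (f_T J1 J2 k1 k2 h E1 E2 Ts (cA t) (cB t) (T t))) /\
  filterlim cA (at_right 0) (locally (cA 0)) /\
  filterlim cB (at_right 0) (locally (cB 0)) /\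
  filterlim T (at_right 0) (locally (T 0)).

Definition in_state_set (cAbar cBbar Tmin Tmax cA cB T : R) : Prop :=
  0 < cA < cAbar /\ 0 < cB < cBbar /\ Tmin < T < Tmax.

Definition strongly_observable (J1 J2 k1 k2 h E1 E2 Ts cAbar cBbar Tmin Tmax r : R)
  : Prop :=
  forall cA cB T cA' cB' T' : R -> R,
    is_solution J1 J2 k1 k2 h E1 E2 Ts cA cB T ->
    is_solution J1 J2 k1 k2 h E1 E2 Ts cA' cB' T' ->
    in_state_set cAbar cBbar Tmin Tmax (cA 0) (cB 0) (T 0) ->
    in_state_set cAbar cBbar Tmin Tmax (cA' 0) (cB' 0) (T' 0) ->
    (cA 0, cB 0, T 0) <> (cA' 0, cB' 0, T' 0) ->
    exists t, 0 <= t <= r /\ T t <> T' t.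

Definition G (J1 J2 k1 k2 E1 E2 T : R) : R :=
  T ^ 2 / ((E2 - E1) * J1) * exp (- E2 / T) *
  ((J1 + J2) * k2 - J1 * k1 * exp ((E2 - E1) / T)).

Definition trig (J1 J2 k1 k2 h E1 E2 Ts T : R) : Prop :=
  T ^ 2 / ((E2 - E1) * J1 * h) * exp (- E2 / T) *
  ((J1 + J2) * k2 - J1 * k1 * exp ((E2 - E1) / T)) + T > Ts.

Definition cond_A1 (J1 J2 k1 k2 h E1 E2 Ts Tmin Tmax a : R) : Prop :=
  forall T, Tmin < T < Tmax -> trig J1 J2 k1 k2 h E1 E2 Ts T ->
    G J1 J2 k1 k2 E1 E2 T <= - a.
Definition cond_A2 (J1 J2 k1 k2 h E1 E2 Ts Tmin Tmax a : R) : Prop :=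
  forall T, Tmin < T < Tmax -> trig J1 J2 k1 k2 h E1 E2 Ts T ->
    G J1 J2 k1 k2 E1 E2 T >= a.

(* Main.v *)
Require Import Defs.
From Stdlib Require Import Reals Lra Classical.
From Coquelicot Require Import Coquelicot.
Open Scope R_scope.


Lemma ball_R (x e y : R) : ball x e y <-> Rabs (y - x) < e.
Proof. reflexivity. Qed.

Lemma right_cont_eps (g : R -> R) : filterlim g (at_right 0) (locally (g 0)) ->
  forall eps, 0 < eps -> exists d, 0 < d /\ forall u, 0 < u < d -> Rabs (g u - g 0) < eps.
Proof.
  intros H eps He.
  destruct (proj1 (filterlim_locally g (g 0)) H (mkposreal eps He)) as [d Hd].
  exists d; split; [apply cond_pos|].
  intros u [Hu1 Hu2]. apply (Hd u); [|exact Hu1].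
  apply ball_R. rewrite Rminus_0_r, Rabs_pos_eq; lra.
Qed.

Lemma cont_eps (g : R -> R) s : continuous g s ->
  forall eps, 0 < eps -> exists d, 0 < d /\ forall u, Rabs (u - s) < d -> Rabs (g u - g s) < eps.
Proof.
  intros H eps He.
  destruct (proj1 (filterlim_locally g (g s)) H (mkposreal eps He)) as [d Hd].
  exists d; split; [apply cond_pos|].
  intros u Hu. apply (Hd u). exact Hu.
Qed.

Lemma D_eq (f : R -> R) t (d d' : R) : is_derive f t d -> @eq R d d' -> is_derive f t d'.
Proof. intros H ->; exact H. Qed.

Lemma D_mult (f g : R -> R) t df dg : is_derive f t df -> is_derive g t dg ->
  is_derive (fun x => f x * g x) t (df * g t + f t * dg).
Proof. intros H1 H2. exact (is_derive_mult f g t df dg H1 H2 Rmult_comm). Qed.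

Lemma D_plus (f g : R -> R) t df dg : is_derive f t df -> is_derive g t dg ->
  is_derive (fun x => f x + g x) t (df + dg).
Proof. intros H1 H2. exact (is_derive_plus f g t df dg H1 H2). Qed.

Lemma D_minus (f g : R -> R) t df dg : is_derive f t df -> is_derive g t dg ->
  is_derive (fun x => f x - g x) t (df - dg).
Proof. intros H1 H2. exact (is_derive_minus f g t df dg H1 H2). Qed.

Lemma D_const (c t : R) : is_derive (fun _ => c) t 0.
Proof. exact (is_derive_const c t). Qed.

Lemma D_id (t : R) : is_derive (fun x => x) t 1.
Proof. exact (is_derive_id t). Qed.

Lemma D_exp (f : R -> R) t d : is_derive f t d -> is_derive (fun x => exp (f x)) t (d * exp (f t)).
Proof. intros H. exact (is_derive_comp exp f t (exp (f t)) d (is_derive_exp _) H). Qed.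

Lemma D_inv (f : R -> R) t d : is_derive f t d -> f t <> 0 -> is_derive (fun x => / f x) t (- d / f t ^ 2).
Proof. apply is_derive_inv. Qed.

Lemma L1 (g df : R -> R) a b : a < b -> (forall x, a <= x <= b -> is_derive g x (df x)) ->
  (forall x, a <= x <= b -> 0 <= df x) -> g a <= g b.
Proof.
  intros Hab Hd Hp.
  destruct (MVT_gen g a b df) as [c [Hc Heq]].
  - intros x Hx. apply Hd. rewrite Rmin_left, Rmax_right in Hx; lra.
  - intros x Hx. rewrite Rmin_left, Rmax_right in Hx by lra.
    apply continuity_pt_filterlim. apply (@ex_derive_continuous R_AbsRing R_NormedModule). exists (df x). apply Hd; lra.
  - rewrite Rmin_left, Rmax_right in Hc by lra.
    assert (0 <= df c) by (apply Hp; lra).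
    assert (0 <= df c * (b - a)) by (apply Rmult_le_pos; lra). lra.
Qed.

Lemma L2 (g df : R -> R) s : 0 < s -> filterlim g (at_right 0) (locally (g 0)) ->
  continuous g s -> (forall x, 0 < x < s -> is_derive g x (df x) /\ 0 <= df x) -> g 0 <= g s.
Proof.
  intros Hs Hr Hc Hd.
  destruct (Rle_or_lt (g 0) (g s)) as [H|H]; [exact H|exfalso].
  set (eps := (g 0 - g s) / 2).
  assert (He : 0 < eps) by (unfold eps; lra).
  destruct (right_cont_eps g Hr eps He) as [d1 [Hd1 H1]].
  destruct (cont_eps g s Hc eps He) as [d2 [Hd2 H2]].
  set (u := Rmin d1 (s/2) / 2). set (v := s - Rmin d2 (s/2) / 2).
  assert (Hu1 : 0 < Rmin d1 (s/2)) by (apply Rmin_glb_lt; lra).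
  assert (Hu2 : Rmin d1 (s/2) <= d1) by apply Rmin_l.
  assert (Hu3 : Rmin d1 (s/2) <= s/2) by apply Rmin_r.
  assert (Hv1 : 0 < Rmin d2 (s/2)) by (apply Rmin_glb_lt; lra).
  assert (Hv2 : Rmin d2 (s/2) <= d2) by apply Rmin_l.
  assert (Hv3 : Rmin d2 (s/2) <= s/2) by apply Rmin_r.
  assert (Huv : g u <= g v).
  { apply (L1 g df); unfold u, v; try lra; intros x Hx; apply Hd; lra. }
  assert (A1 := H1 u ltac:(unfold u; lra)).
  assert (A2 := H2 v ltac:(unfold v; rewrite Rabs_left; lra)).
  apply Rabs_lt_between in A1. apply Rabs_lt_between in A2.
  unfold eps in *; lra.
Qed.
Lemma lim_mult {T} F {FF : Filter F} (f g : T -> R) a b :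
  filterlim f F (locally a) -> filterlim g F (locally b) -> filterlim (fun x => f x * g x) F (locally (a*b)).
Proof.
  intros Hf Hg.
  eapply filterlim_comp_2; [exact Hf|exact Hg|].
  apply (filterlim_Rbar_mult (Finite a) (Finite b) (Finite (a*b))).
  reflexivity.
Qed.
Lemma lim_plus {T} F {FF : Filter F} (f g : T -> R) a b :
  filterlim f F (locally a) -> filterlim g F (locally b) -> filterlim (fun x => f x + g x) F (locally (a+b)).
Proof.
  intros Hf Hg.
  eapply filterlim_comp_2; [exact Hf|exact Hg|].
  apply (@filterlim_plus R_AbsRing R_NormedModule a b).
Qed.
Lemma lim_const {T} F {FF : Filter F} (c : R) : filterlim (fun _ : T => c) F (locally c).
Proof. apply filterlim_const. Qed.
Lemma lim_cont (g : R -> R) : continuous g 0 -> filterlim g (at_right 0) (locally (g 0)).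
Proof. intros H. eapply filterlim_filter_le_1; [|exact H]. intros P HP. apply filter_le_within. exact HP. Qed.

Definition rc (f : R -> R) := filterlim f (at_right 0) (locally (f 0)).

Lemma rc_cont (g : R -> R) : (forall t, ex_derive g t) -> rc g.
Proof. intros H. apply lim_cont. apply (@ex_derive_continuous R_AbsRing R_NormedModule). apply H. Qed.

Lemma D_explin k t : is_derive (fun x => exp (k * x)) t (k * exp (k * t)).
Proof.
  assert (H := D_exp (fun x => k*x) t (k*1) (is_derive_scal _ t k 1 (D_id t))).
  eapply D_eq; [exact H|]. simpl; ring.
Qed.

Lemma barrier (f df : R -> R) k s : 0 < s -> rc f ->
  (forall x, 0 < x <= s -> is_derive f x (df x)) ->
  (forall x, 0 < x < s -> 0 <= df x + k * f x) -> f 0 <= f s * exp (k * s).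
Proof.
  intros Hs Hr Hd Hp.
  set (g := fun t => f t * exp (k * t)).
  set (dg := fun t => (df t + k * f t) * exp (k * t)).
  assert (Hdg : forall x, 0 < x <= s -> is_derive g x (dg x)).
  { intros x Hx. unfold g, dg. eapply D_eq; [apply D_mult; [apply Hd; exact Hx | apply D_explin] | cbv beta; ring]. }
  assert (L : g 0 <= g s).
  { apply (L2 g dg s Hs).
    - unfold rc, g. refine (lim_mult _ f (fun t => exp (k*t)) _ _ Hr _). apply (rc_cont (fun t => exp (k * t))).
      intros t. eexists. apply D_explin.
    - apply (@ex_derive_continuous R_AbsRing R_NormedModule). eexists. apply Hdg. lra.
    - intros x Hx. split. apply Hdg; lra. unfold dg. apply Rmult_le_pos. apply Hp; lra.
      apply Rlt_le, exp_pos. }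
  unfold g in L. rewrite Rmult_0_r, exp_0, Rmult_1_r in L. exact L.
Qed.

Lemma rc_limit0 (f : R -> R) r : 0 < r -> rc f -> (forall u, 0 < u < r -> f u = 0) -> f 0 = 0.
Proof.
  intros Hr Hf H. destruct (Req_dec (f 0) 0) as [E|E]; [exact E|exfalso].
  destruct (right_cont_eps f Hf (Rabs (f 0)) ltac:(apply Rabs_pos_lt; exact E)) as [d [Hd Hu]].
  assert (A := Hu (Rmin d r / 2) ltac:(assert (0 < Rmin d r) by (apply Rmin_glb_lt; lra);
     assert (Rmin d r <= d) by apply Rmin_l; lra)).
  rewrite H in A. rewrite Rminus_0_l, Rabs_Ropp in A. lra.
  assert (0 < Rmin d r) by (apply Rmin_glb_lt; lra); assert (Rmin d r <= r) by apply Rmin_r; lra.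
Qed.

Lemma deriv_eq_loc (f g : R -> R) t d1 d2 a b : a < t < b -> (forall x, a < x < b -> f x = g x) ->
  is_derive f t d1 -> is_derive g t d2 -> d1 = d2.
Proof.
  intros Ht He H1 H2.
  assert (H3 : is_derive g t d1).
  { apply (is_derive_ext_loc f g t d1); [|exact H1].
    exists (mkposreal (Rmin (t - a) (b - t)) ltac:(apply Rmin_glb_lt; lra)).
    intros y Hy. apply ball_R in Hy. simpl in Hy.
    assert (Rmin (t-a) (b-t) <= t - a) by apply Rmin_l.
    assert (Rmin (t-a) (b-t) <= b - t) by apply Rmin_r.
    apply Rabs_lt_between in Hy. change (minus y t) with (y - t) in Hy. apply He. lra. }
  rewrite <- (is_derive_unique g t d1 H3). rewrite (is_derive_unique g t d2 H2). reflexivity.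
Qed.

Lemma exp_mono x y : x <= y -> exp x <= exp y.
Proof. intros [H|H]. apply Rlt_le, exp_increasing, H. subst; lra. Qed.

Lemma e_le1 E T : 0 <= E -> 0 < T -> 0 < exp (- E / T) <= 1.
Proof.
  intros HE HT. split. apply exp_pos. rewrite <- exp_0. apply exp_mono.
  unfold Rdiv. assert (0 <= E * / T) by (apply Rmult_le_pos; [lra|apply Rlt_le, Rinv_0_lt_compat; lra]).
  lra.
Qed.

Lemma e_ratio E1 E2 T : T <> 0 -> exp (- E1 / T) = exp (- E2 / T) * exp ((E2 - E1) / T).
Proof. intros HT. rewrite <- exp_plus. f_equal. field. exact HT. Qed.

Lemma open1 (f : R -> R) : (forall x, 0 < x -> ex_derive f x) -> rc f ->
  forall s, 0 <= s -> forall lo hi, lo < f s < hi ->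
  exists d, 0 < d /\ forall v, s <= v < s + d -> lo < f v < hi.
Proof.
  intros Hd Hr s Hs lo hi Hf.
  set (eps := Rmin (f s - lo) (hi - f s)).
  assert (He : 0 < eps) by (apply Rmin_glb_lt; lra).
  assert (E1 : eps <= f s - lo) by apply Rmin_l.
  assert (E2 : eps <= hi - f s) by apply Rmin_r.
  destruct Hs as [Hs|Hs].
  - assert (Hc : continuous f s) by (apply (@ex_derive_continuous R_AbsRing R_NormedModule); apply Hd; exact Hs).
    destruct (cont_eps f s Hc eps He) as [d [Hd0 Hu]].
    exists d. split; [exact Hd0|]. intros v Hv.
    assert (A := Hu v ltac:(rewrite Rabs_pos_eq; lra)). apply Rabs_lt_between in A. lra.
  - subst s. destruct (right_cont_eps f Hr eps He) as [d [Hd0 Hu]].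
    exists d. split; [exact Hd0|]. intros v Hv.
    destruct (Req_dec v 0) as [->|Hv0]. lra.
    assert (A := Hu v ltac:(lra)). apply Rabs_lt_between in A. lra.
Qed.

Lemma sol_facts J1 J2 k1 k2 h E1 E2 Ts cA cB T :
  is_solution J1 J2 k1 k2 h E1 E2 Ts cA cB T ->
  rc cA /\ rc cB /\ rc T /\
  (forall x, 0 < x -> ex_derive cA x) /\ (forall x, 0 < x -> ex_derive cB x) /\
  (forall x, 0 < x -> ex_derive T x).
Proof.
  intros [Hd [H1 [H2 H3]]]. repeat split; try assumption;
  intros x Hx; destruct (Hd x Hx) as [A [B C]]; eexists; eassumption.
Qed.

Lemma rc_minus_c (f : R -> R) c : rc f -> rc (fun t => c - f t).
Proof.
  intros H. unfold rc.
  assert (A := lim_plus (at_right 0) (fun _ => c) (fun t => -1 * f t) c (-1 * f 0)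
    (lim_const _ c) (lim_mult _ (fun _ => -1) f (-1) (f 0) (lim_const _ (-1)) H)).
  replace (c - f 0) with (c + -1 * f 0) by ring.
  eapply filterlim_ext; [|exact A]. intros x; simpl; ring.
Qed.

Lemma rc_minus_c' (f : R -> R) c : rc f -> rc (fun t => f t - c).
Proof.
  intros H. unfold rc.
  assert (A := lim_plus (at_right 0) f (fun _ => -c) (f 0) (-c) H (lim_const _ (-c))).
  replace (f 0 - c) with (f 0 + - c) by ring.
  eapply filterlim_ext; [|exact A]. intros x; simpl; ring.
Qed.

Lemma pos_from a b c : 0 < a -> a <= b * exp c -> 0 < b.
Proof. intros Ha H. assert (He := exp_pos c). destruct (Rle_or_lt b 0); [|assumption]. nra. Qed.

Lemma D_cminus (f : R -> R) c x d : is_derive f x d -> is_derive (fun t => c - f t) x (- d).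
Proof. intros H. eapply D_eq. apply D_minus. apply D_const. exact H. ring. Qed.

Lemma D_minusc (f : R -> R) c x d : is_derive f x d -> is_derive (fun t => f t - c) x d.
Proof. intros H. eapply D_eq. apply D_minus. exact H. apply D_const. ring. Qed.

Lemma ratio_bound k1 k2 E1 E2 cAbar cBbar Tmin T : 0 < k1 -> 0 < k2 -> 0 < cAbar -> 0 < Tmin ->
  (E1 >= E2 -> k1 / k2 * cAbar < cBbar) ->
  (E1 < E2 -> k1 / k2 * exp ((E2 - E1) / Tmin) * cAbar < cBbar) ->
  Tmin < T -> k1 * exp ((E2 - E1) / T) * cAbar <= k2 * cBbar.
Proof.
  intros Hk1 Hk2 Hc HTm H1 H2 HT.
  destruct (Rlt_or_le E1 E2) as [L|L].
  - specialize (H2 L).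
    assert (A : exp ((E2 - E1) / T) <= exp ((E2 - E1) / Tmin)).
    { apply exp_mono. unfold Rdiv. apply Rmult_le_compat_l; [lra|].
      apply Rlt_le, Rinv_lt_contravar; nra. }
    assert (B : k1 * exp ((E2 - E1) / Tmin) * cAbar < k2 * cBbar).
    { apply (Rmult_lt_compat_l k2) in H2; [|lra]. field_simplify in H2; lra. }
    assert (k1 * exp ((E2 - E1) / T) * cAbar <= k1 * exp ((E2 - E1) / Tmin) * cAbar).
    { apply Rmult_le_compat_r; [lra|]. apply Rmult_le_compat_l; lra. }
    lra.
  - specialize (H1 ltac:(lra)).
    assert (A : exp ((E2 - E1) / T) <= 1).
    { rewrite <- exp_0. apply exp_mono. unfold Rdiv.
      assert (0 <= (E1 - E2) * / T) by (apply Rmult_le_pos; [lra|apply Rlt_le, Rinv_0_lt_compat; lra]).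
      lra. }
    assert (B : k1 * cAbar < k2 * cBbar).
    { apply (Rmult_lt_compat_l k2) in H1; [|lra]. field_simplify in H1; lra. }
    assert (k1 * exp ((E2 - E1) / T) * cAbar <= k1 * 1 * cAbar).
    { apply Rmult_le_compat_r; [lra|]. apply Rmult_le_compat_l; lra. }
    lra.
Qed.

Lemma step_barrier (J1 J2 k1 k2 h E1 E2 Ts cAbar cBbar Tmin Tmax : R)
  (HJ1 : 0 < J1) (HJ2 : 0 < J2) (Hk1 : 0 < k1) (Hk2 : 0 < k2) (Hh : 0 < h)
  (HE1 : 0 < E1) (HE2 : 0 < E2) (HTs : 0 < Ts)
  (HcAbar : 0 < cAbar) (HTmin : 0 < Tmin) (HTminTs : Tmin <= Ts)
  (HcB1 : E1 >= E2 -> k1 / k2 * cAbar < cBbar)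
  (HcB2 : E1 < E2 -> k1 / k2 * exp ((E2 - E1) / Tmin) * cAbar < cBbar)
  (HTmax : (J1 * k1 * cAbar + J2 * k2 * cBbar) / h + Ts <= Tmax)
  cA cB T :
  is_solution J1 J2 k1 k2 h E1 E2 Ts cA cB T ->
  in_state_set cAbar cBbar Tmin Tmax (cA 0) (cB 0) (T 0) ->
  forall s, 0 < s -> (forall v, 0 <= v < s -> in_state_set cAbar cBbar Tmin Tmax (cA v) (cB v) (T v)) ->
  in_state_set cAbar cBbar Tmin Tmax (cA s) (cB s) (T s).
Proof.
  intros Hsol P0 s Hs Hv.
  destruct (sol_facts _ _ _ _ _ _ _ _ _ _ _ Hsol) as [rA [rB [rT _]]].
  destruct Hsol as [Hd _].
  assert (HTm : h * ((J1 * k1 * cAbar + J2 * k2 * cBbar) / h + Ts) <= h * Tmax)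
    by (apply Rmult_le_compat_l; lra).
  replace (h * ((J1 * k1 * cAbar + J2 * k2 * cBbar) / h + Ts)) with
    (J1 * k1 * cAbar + J2 * k2 * cBbar + h * Ts) in HTm by (field; lra).
  destruct P0 as [[A0 A0'] [[B0 B0'] [T0 T0']]].
  assert (F : forall x, 0 < x < s ->
    0 < cA x < cAbar /\ 0 < cB x < cBbar /\ Tmin < T x < Tmax /\
    0 < exp (- E1 / T x) <= 1 /\ 0 < exp (- E2 / T x) <= 1 /\
    exp (- E1 / T x) = exp (- E2 / T x) * exp ((E2 - E1) / T x) /\
    k1 * exp ((E2 - E1) / T x) * cAbar <= k2 * cBbar /\ 0 < exp ((E2 - E1) / T x)).
  { intros x Hx. destruct (Hv x ltac:(lra)) as [HA [HB HT]].
    split; [exact HA|]. split; [exact HB|]. split; [exact HT|].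
    split; [apply e_le1; lra|]. split; [apply e_le1; lra|].
    split; [apply e_ratio; lra|]. split; [|apply exp_pos].
    apply (ratio_bound k1 k2 E1 E2 cAbar cBbar Tmin); lra. }
  assert (DA : forall x, 0 < x <= s -> is_derive cA x (f_cA k1 E1 (cA x) (T x))) by (intros x Hx; apply Hd; lra).
  assert (DB : forall x, 0 < x <= s -> is_derive cB x (f_cB k1 k2 E1 E2 (cA x) (cB x) (T x))) by (intros x Hx; apply Hd; lra).
  assert (DT : forall x, 0 < x <= s -> is_derive T x (f_T J1 J2 k1 k2 h E1 E2 Ts (cA x) (cB x) (T x))) by (intros x Hx; apply Hd; lra).
  split; [split|split; [split|split]].
  - apply (pos_from (cA 0) _ (k1 * s)); [lra|].
    apply (barrier cA (fun t => f_cA k1 E1 (cA t) (T t)) k1 s Hs rA DA).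
    intros x Hx. destruct (F x Hx) as [[a1 a2] [_ [_ [[e1 e1'] _]]]]. unfold f_cA.
    assert (0 <= k1 * cA x * (1 - exp (- E1 / T x))) by (apply Rmult_le_pos; nra). lra.
  - assert (0 < cAbar - cA s); [|lra].
    apply (pos_from (cAbar - cA 0) _ (0 * s)); [lra|].
    apply (barrier (fun t => cAbar - cA t) (fun t => - f_cA k1 E1 (cA t) (T t)) 0 s Hs (rc_minus_c _ _ rA)).
    intros x Hx; apply D_cminus, DA, Hx.
    intros x Hx. destruct (F x Hx) as [[a1 a2] [_ [_ [[e1 e1'] _]]]]. unfold f_cA.
    assert (0 <= k1 * cA x * exp (- E1 / T x)) by (apply Rmult_le_pos; nra). lra.
  - apply (pos_from (cB 0) _ (k2 * s)); [lra|].
    apply (barrier cB (fun t => f_cB k1 k2 E1 E2 (cA t) (cB t) (T t)) k2 s Hs rB DB).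
    intros x Hx. destruct (F x Hx) as [[a1 a2] [[b1 b2] [_ [[e1 e1'] [[e2 e2'] _]]]]]. unfold f_cB.
    assert (0 <= k2 * cB x * (1 - exp (- E2 / T x))) by (apply Rmult_le_pos; nra).
    assert (0 <= k1 * exp (- E1 / T x) * cA x) by (apply Rmult_le_pos; nra). lra.
  - assert (0 < cBbar - cB s); [|lra].
    apply (pos_from (cBbar - cB 0) _ (k2 * s)); [lra|].
    apply (barrier (fun t => cBbar - cB t) (fun t => - f_cB k1 k2 E1 E2 (cA t) (cB t) (T t)) k2 s Hs (rc_minus_c _ _ rB)).
    intros x Hx; apply D_cminus, DB, Hx.
    intros x Hx. destruct (F x Hx) as [[a1 a2] [[b1 b2] [_ [[e1 e1'] [[e2 e2'] [Er [Rb Rp]]]]]]]. unfold f_cB.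
    rewrite Er.
    set (e := exp (- E2 / T x)) in *. set (R0 := exp ((E2 - E1) / T x)) in *.
    assert (0 <= k2 * (cBbar - cB x) * (1 - e)) by (apply Rmult_le_pos; [apply Rmult_le_pos|]; lra).
    assert (e * (k1 * R0 * cA x) <= e * (k1 * R0 * cAbar)).
    { apply Rmult_le_compat_l; [lra|]. apply Rmult_le_compat_l; [|lra]. nra. }
    assert (e * (k1 * R0 * cAbar) <= e * (k2 * cBbar)) by (apply Rmult_le_compat_l; lra).
    lra.
  - assert (0 < T s - Tmin); [|lra].
    apply (pos_from (T 0 - Tmin) _ (h * s)); [lra|].
    apply (barrier (fun t => T t - Tmin) (fun t => f_T J1 J2 k1 k2 h E1 E2 Ts (cA t) (cB t) (T t)) h s Hs (rc_minus_c' _ _ rT)).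
    intros x Hx; apply D_minusc, DT, Hx.
    intros x Hx. destruct (F x Hx) as [[a1 a2] [[b1 b2] [_ [[e1 e1'] [[e2 e2'] _]]]]]. unfold f_T.
    assert (0 <= J1 * k1 * exp (- E1 / T x) * cA x) by (apply Rmult_le_pos; [apply Rmult_le_pos|]; nra).
    assert (0 <= J2 * k2 * exp (- E2 / T x) * cB x) by (apply Rmult_le_pos; [apply Rmult_le_pos|]; nra).
    nra.
  - assert (0 < Tmax - T s); [|lra].
    apply (pos_from (Tmax - T 0) _ (h * s)); [lra|].
    apply (barrier (fun t => Tmax - T t) (fun t => - f_T J1 J2 k1 k2 h E1 E2 Ts (cA t) (cB t) (T t)) h s Hs (rc_minus_c _ _ rT)).
    intros x Hx; apply D_cminus, DT, Hx.
    intros x Hx. destruct (F x Hx) as [[a1 a2] [[b1 b2] [_ [[e1 e1'] [[e2 e2'] _]]]]]. unfold f_T.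
    assert (exp (- E1 / T x) * cA x <= cAbar) by nra.
    assert (exp (- E2 / T x) * cB x <= cBbar) by nra.
    assert (J1 * k1 * (exp (- E1 / T x) * cA x) <= J1 * k1 * cAbar) by (apply Rmult_le_compat_l; nra).
    assert (J2 * k2 * (exp (- E2 / T x) * cB x) <= J2 * k2 * cBbar) by (apply Rmult_le_compat_l; nra).
    nra.
Qed.

Lemma invariance (J1 J2 k1 k2 h E1 E2 Ts cAbar cBbar Tmin Tmax : R)
  (HJ1 : 0 < J1) (HJ2 : 0 < J2) (Hk1 : 0 < k1) (Hk2 : 0 < k2) (Hh : 0 < h)
  (HE1 : 0 < E1) (HE2 : 0 < E2) (HTs : 0 < Ts)
  (HcAbar : 0 < cAbar) (HTmin : 0 < Tmin) (HTminTs : Tmin <= Ts)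
  (HcB1 : E1 >= E2 -> k1 / k2 * cAbar < cBbar)
  (HcB2 : E1 < E2 -> k1 / k2 * exp ((E2 - E1) / Tmin) * cAbar < cBbar)
  (HTmax : (J1 * k1 * cAbar + J2 * k2 * cBbar) / h + Ts <= Tmax)
  cA cB T :
  is_solution J1 J2 k1 k2 h E1 E2 Ts cA cB T ->
  in_state_set cAbar cBbar Tmin Tmax (cA 0) (cB 0) (T 0) ->
  forall t, 0 <= t -> in_state_set cAbar cBbar Tmin Tmax (cA t) (cB t) (T t).
Proof.
  intros Hsol P0.
  set (P := fun v => in_state_set cAbar cBbar Tmin Tmax (cA v) (cB v) (T v)).
  change (forall t, 0 <= t -> P t).
  assert (SB := step_barrier J1 J2 k1 k2 h E1 E2 Ts cAbar cBbar Tmin Tmax HJ1 HJ2 Hk1 Hk2 Hh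
     HE1 HE2 HTs HcAbar HTmin HTminTs HcB1 HcB2 HTmax cA cB T Hsol P0).
  destruct (sol_facts _ _ _ _ _ _ _ _ _ _ _ Hsol) as [rA [rB [rT [dA [dB dT]]]]].
  assert (OP : forall s, 0 <= s -> P s -> exists d, 0 < d /\ forall v, s <= v < s + d -> P v).
  { intros s Hs [[a1 a2] [[b1 b2] [t1 t2]]].
    destruct (open1 cA dA rA s Hs 0 cAbar (conj a1 a2)) as [d1 [Hd1 H1]].
    destruct (open1 cB dB rB s Hs 0 cBbar (conj b1 b2)) as [d2 [Hd2 H2]].
    destruct (open1 T dT rT s Hs Tmin Tmax (conj t1 t2)) as [d3 [Hd3 H3]].
    exists (Rmin d1 (Rmin d2 d3)). split. repeat apply Rmin_glb_lt; lra.
    assert (Rmin d1 (Rmin d2 d3) <= d1) by apply Rmin_l.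
    assert (Rmin d1 (Rmin d2 d3) <= Rmin d2 d3) by apply Rmin_r.
    assert (Rmin d2 d3 <= d2) by apply Rmin_l.
    assert (Rmin d2 d3 <= d3) by apply Rmin_r.
    intros v Hv. split; [apply H1|split; [apply H2|apply H3]]; lra. }
  intros t0 Ht0. apply NNPP. intros Hn.
  set (E := fun u => 0 <= u <= t0 /\ forall v, 0 <= v <= u -> P v).
  assert (Eb : bound E) by (exists t0; intros u [Hu _]; lra).
  assert (E0 : exists x, E x).
  { exists 0. split; [lra|]. intros v Hv. replace v with 0 by lra. exact P0. }
  destruct (completeness E Eb E0) as [s [Hub Hlub]].
  assert (Hs0 : 0 <= s) by (apply Hub; split; [lra|]; intros v Hv; replace v with 0 by lra; exact P0).
  assert (Hst : s <= t0) by (apply Hlub; intros u [Hu _]; lra).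
  assert (C1 : forall v, 0 <= v < s -> P v).
  { intros v Hv. apply NNPP. intros Hpv.
    assert (s <= v); [|lra]. apply Hlub. intros u [Hu Hu'].
    destruct (Rle_or_lt u v) as [L|L]; [exact L|]. exfalso. apply Hpv, Hu'. lra. }
  assert (C2 : P s).
  { destruct Hs0 as [Hs0|Hs0]. apply SB; assumption. subst s. exact P0. }
  assert (Hst' : s < t0) by (destruct Hst as [L|L]; [exact L|subst; contradiction]).
  destruct (OP s Hs0 C2) as [d [Hd Hdv]].
  set (w := s + Rmin d (t0 - s) / 2).
  assert (0 < Rmin d (t0 - s)) by (apply Rmin_glb_lt; lra).
  assert (Rmin d (t0 - s) <= d) by apply Rmin_l.
  assert (Rmin d (t0 - s) <= t0 - s) by apply Rmin_r.
  assert (Ew : E w).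
  { split; [unfold w; lra|]. intros v Hv. destruct (Rlt_or_le v s).
    apply C1; lra. apply Hdv. unfold w in Hv; lra. }
  assert (w <= s) by (apply Hub, Ew). unfold w in *; lra.
Qed.

Lemma rc_sub (f g : R -> R) : rc f -> rc g -> rc (fun t => f t - g t).
Proof.
  intros Hf Hg. unfold rc.
  assert (A := lim_plus (at_right 0) f (fun t => -1 * g t) (f 0) (-1 * g 0) Hf
    (lim_mult _ (fun _ => -1) g (-1) (g 0) (lim_const _ (-1)) Hg)).
  replace (f 0 - g 0) with (f 0 + -1 * g 0) by ring.
  eapply filterlim_ext; [|exact A]. intros x; simpl; ring.
Qed.

Lemma rc_lin (f : R -> R) c1 c2 : rc f -> rc (fun t => c1 * f t + c2 * t).
Proof.
  intros Hf. unfold rc.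
  assert (B : filterlim (fun t => c2 * t) (at_right 0) (locally (c2 * 0))).
  { apply (rc_cont (fun t => c2 * t)). intros t. eexists. apply is_derive_scal, D_id. }
  exact (lim_plus (at_right 0) (fun t => c1 * f t) (fun t => c2 * t) (c1 * f 0) (c2 * 0)
    (lim_mult _ (fun _ => c1) f c1 (f 0) (lim_const _ c1) Hf) B).
Qed.

Lemma rc_sq (f : R -> R) c : rc f -> rc (fun t => c * (f t * f t)).
Proof.
  intros Hf. unfold rc.
  exact (lim_mult _ (fun _ => c) (fun t => f t * f t) c (f 0 * f 0) (lim_const _ c)
    (lim_mult _ f f (f 0) (f 0) Hf Hf)).
Qed.

Lemma D_sq (f : R -> R) c t d : is_derive f t d -> is_derive (fun s => c * (f s * f s)) t (c * (2 * f t * d)).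
Proof. intros H. eapply D_eq. apply is_derive_scal. apply D_mult; exact H. ring. Qed.

Lemma D_eT E (T : R -> R) t d : is_derive T t d -> T t <> 0 ->
  is_derive (fun s => exp (- E / T s)) t (E * d / (T t) ^ 2 * exp (- E / T t)).
Proof.
  intros H HT.
  assert (A : is_derive (fun s => - E * / T s) t (- E * (- d / T t ^ 2))).
  { apply is_derive_scal. apply D_inv; assumption. }
  eapply D_eq. apply (D_exp (fun s => - E * / T s)). exact A.
  unfold Rdiv. field. exact HT.
Qed.

Theorem mainTheorem5
  (J1 J2 k1 k2 h E1 E2 Ts cAbar cBbar Tmin Tmax a : R)
  (HJ1 : 0 < J1) (HJ2 : 0 < J2) (Hk1 : 0 < k1) (Hk2 : 0 < k2) (Hh : 0 < h)
  (HE1 : 0 < E1) (HE2 : 0 < E2) (HTs : 0 < Ts)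
  (HcAbar : 0 < cAbar) (HTmin : 0 < Tmin) (HTminTs : Tmin <= Ts)
  (HcB1 : E1 >= E2 -> k1 / k2 * cAbar < cBbar)
  (HcB2 : E1 < E2 -> k1 / k2 * exp ((E2 - E1) / Tmin) * cAbar < cBbar)
  (HTmax : (J1 * k1 * cAbar + J2 * k2 * cBbar) / h + Ts <= Tmax)
  (Heq : E1 = E2 -> (J1 + J2) * k2 <> J1 * k1)
  (Hneq : E1 <> E2 ->
     0 < a /\ (cond_A1 J1 J2 k1 k2 h E1 E2 Ts Tmin Tmax a \/
               cond_A2 J1 J2 k1 k2 h E1 E2 Ts Tmin Tmax a)) :
  forall r : R, 0 < r ->
    (E1 <> E2 -> (Tmax - Tmin) / a <= r) ->
    strongly_observable J1 J2 k1 k2 h E1 E2 Ts cAbar cBbar Tmin Tmax r.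
Proof.
  intros r Hr Hra cA cB T cA' cB' T' S1 S2 I1 I2 Hne.
  assert (INV := invariance J1 J2 k1 k2 h E1 E2 Ts cAbar cBbar Tmin Tmax HJ1 HJ2 Hk1 Hk2 Hh
     HE1 HE2 HTs HcAbar HTmin HTminTs HcB1 HcB2 HTmax cA cB T S1 I1).
  apply NNPP. intros Hno.
  assert (HTT : forall t, 0 <= t <= r -> T t = T' t).
  { intros t Ht. apply NNPP. intros Hn. apply Hno. exists t. split; assumption. }
  destruct (sol_facts _ _ _ _ _ _ _ _ _ _ _ S1) as [rA [rB [rT _]]].
  destruct (sol_facts _ _ _ _ _ _ _ _ _ _ _ S2) as [rA' [rB' [rT' _]]].
  destruct S1 as [Hd _]. destruct S2 as [Hd' _].
  set (x := fun t => cA t - cA' t). set (y := fun t => cB t - cB' t).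
  assert (rx : rc x) by (apply rc_sub; assumption).
  assert (ry : rc y) by (apply rc_sub; assumption).
  assert (Dx : forall t, 0 < t <= r -> is_derive x t (- k1 * exp (- E1 / T t) * x t)).
  { intros t Ht. destruct (Hd t ltac:(lra)) as [A _]. destruct (Hd' t ltac:(lra)) as [A' _].
    eapply D_eq. apply D_minus; eassumption. unfold f_cA, x. rewrite <- (HTT t) by lra. ring. }
  assert (Dy : forall t, 0 < t <= r -> is_derive y t
     (k1 * exp (- E1 / T t) * x t - k2 * exp (- E2 / T t) * y t)).
  { intros t Ht. destruct (Hd t ltac:(lra)) as [_ [A _]]. destruct (Hd' t ltac:(lra)) as [_ [A' _]].
    eapply D_eq. apply D_minus; eassumption. unfold f_cB, x, y. rewrite <- (HTT t) by lra. ring. }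
  assert (ID : forall t, 0 < t < r ->
    J1 * k1 * exp (- E1 / T t) * x t + J2 * k2 * exp (- E2 / T t) * y t = 0).
  { intros t Ht. destruct (Hd t ltac:(lra)) as [_ [_ A]]. destruct (Hd' t ltac:(lra)) as [_ [_ A']].
    assert (Q := deriv_eq_loc T T' t _ _ 0 r Ht ltac:(intros u Hu; apply HTT; lra) A A').
    unfold f_T in Q. rewrite <- (HTT t) in Q by lra. unfold x, y. lra. }
  assert (XZ : (forall s, 0 < s < r -> x s = 0) -> False).
  { intros H0.
    assert (Y0 : forall s, 0 < s < r -> y s = 0).
    { intros s Hs. assert (Q := ID s Hs). rewrite (H0 s Hs) in Q.
      assert (0 < J2 * k2 * exp (- E2 / T s)) by (apply Rmult_lt_0_compat; [nra|apply exp_pos]).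
      nra. }
    assert (x0 := rc_limit0 x r Hr rx H0). assert (y0 := rc_limit0 y r Hr ry Y0).
    apply Hne. unfold x, y in *. rewrite (HTT 0) by lra. replace (cA 0) with (cA' 0) by lra. replace (cB 0) with (cB' 0) by lra. reflexivity. }
  destruct (Req_dec (x 0) 0) as [X0|X0].
  { apply XZ. intros s Hs.
    assert (B := barrier (fun t => -1 * (x t * x t))
       (fun t => -1 * (2 * x t * (- k1 * exp (- E1 / T t) * x t))) 0 s (proj1 Hs) (rc_sq x (-1) rx)
       (fun u Hu => D_sq x (-1) u _ (Dx u ltac:(lra)))
       ltac:(intros u Hu; assert (Hexp := exp_pos (- E1 / T u));
             assert (0 <= k1 * exp (- E1 / T u) * (x u * x u)) by (apply Rmult_le_pos; nra); nra)).
    cbv beta in B. rewrite X0, (Rmult_0_l s), exp_0 in B. nra. }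
  destruct (Req_dec E1 E2) as [EE|EE].
  { apply XZ. intros t Ht. subst E2.
    set (psi := fun u => J1 * k1 * x u + J2 * k2 * y u).
    assert (Z : forall u, 0 < u < r -> psi u = 0).
    { intros u Hu. assert (Q := ID u Hu). assert (Hexp := exp_pos (- E1 / T u)).
      unfold psi. apply (Rmult_eq_reg_l (exp (- E1 / T u))); [|lra]. lra. }
    assert (Dp : is_derive psi t (J1 * k1 * (- k1 * exp (- E1 / T t) * x t) +
        J2 * k2 * (k1 * exp (- E1 / T t) * x t - k2 * exp (- E1 / T t) * y t))).
    { apply D_plus; apply is_derive_scal; [apply Dx|apply Dy]; lra. }
    assert (Q := deriv_eq_loc psi (fun _ => 0) t _ _ 0 r Ht Z Dp (D_const 0 t)).
    assert (P := Z t Ht). unfold psi in P. simpl in Q.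
    assert (W : k1 * exp (- E1 / T t) * ((J1 + J2) * k2 - J1 * k1) * x t = 0).
    { replace (k1 * exp (- E1 / T t) * ((J1 + J2) * k2 - J1 * k1) * x t) with
        ((J1 * k1 * (- k1 * exp (- E1 / T t) * x t) +
        J2 * k2 * (k1 * exp (- E1 / T t) * x t - k2 * exp (- E1 / T t) * y t))
        + k2 * exp (- E1 / T t) * (J1 * k1 * x t + J2 * k2 * y t)) by ring.
      rewrite P, Rmult_0_r, Rplus_0_r. exact Q. }
    assert (Hexp := exp_pos (- E1 / T t)).
    assert (HH := Heq eq_refl).
    apply Rmult_integral in W. destruct W as [W|W]; [|exact W].
    exfalso. apply Rmult_integral in W. destruct W as [W|W]; [|apply HH; lra].
    apply Rmult_integral in W. destruct W; lra. }
  destruct (Hneq EE) as [Ha Hc]. specialize (Hra EE).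
  assert (XN : forall s, 0 < s <= r -> x s <> 0).
  { intros s Hs.
    assert (B := barrier (fun t => 1 * (x t * x t))
       (fun t => 1 * (2 * x t * (- k1 * exp (- E1 / T t) * x t))) (2 * k1) s (proj1 Hs) (rc_sq x 1 rx)
       (fun u Hu => D_sq x 1 u _ (Dx u ltac:(lra)))
       ltac:(intros u Hu; destruct (INV u ltac:(lra)) as [_ [_ [HT1 _]]];
             assert (He := e_le1 E1 (T u) ltac:(lra) ltac:(lra));
             assert (0 <= k1 * (x u * x u) * (1 - exp (- E1 / T u))) by (apply Rmult_le_pos; nra); nra)).
    cbv beta in B. apply pos_from in B; [nra|nra]. }
  assert (TD : forall t, 0 < t < r -> f_T J1 J2 k1 k2 h E1 E2 Ts (cA t) (cB t) (T t) = G J1 J2 k1 k2 E1 E2 (T t)).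
  { intros t Ht.
    destruct (INV t ltac:(lra)) as [_ [_ [HT1 _]]].
    assert (Tnz : T t <> 0) by lra.
    destruct (Hd t ltac:(lra)) as [_ [_ DTt]].
    set (d := f_T J1 J2 k1 k2 h E1 E2 Ts (cA t) (cB t) (T t)) in *.
    set (phi := fun u => J1 * k1 * (exp (- E1 / T u) * x u) + J2 * k2 * (exp (- E2 / T u) * y u)).
    assert (Z : forall u, 0 < u < r -> phi u = 0).
    { intros u Hu. assert (Q := ID u Hu). unfold phi. lra. }
    assert (Dp := D_plus _ _ t _ _
      (is_derive_scal _ t (J1 * k1) _ (D_mult _ _ t _ _ (D_eT E1 T t d DTt Tnz) (Dx t ltac:(lra))))
      (is_derive_scal _ t (J2 * k2) _ (D_mult _ _ t _ _ (D_eT E2 T t d DTt Tnz) (Dy t ltac:(lra))))).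
    assert (Q := deriv_eq_loc phi (fun _ => 0) t _ _ 0 r Ht Z Dp (D_const 0 t)).
    assert (P := ID t Ht).
    assert (Er := e_ratio E1 E2 (T t) Tnz).
    set (e1 := exp (- E1 / T t)) in *. set (e2 := exp (- E2 / T t)) in *.
    set (R0 := exp ((E2 - E1) / T t)) in *. set (X := x t) in *. set (Y := y t) in *.
    set (Tt := T t) in *.
    set (Zz := J1 * (E1 - E2) * d + Tt ^ 2 * ((J1 + J2) * k2 * e2 - J1 * k1 * e1)).
    assert (W : k1 * e1 * X * Zz = Tt ^ 2 * (J1 * k1 * (E1 * d / Tt ^ 2 * e1 * X + e1 * (- k1 * e1 * X)) +
        J2 * k2 * (E2 * d / Tt ^ 2 * e2 * Y + e2 * (k1 * e1 * X - k2 * e2 * Y)))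
        - (J1 * k1 * e1 * X + J2 * k2 * e2 * Y) * (E2 * d - k2 * e2 * Tt ^ 2)).
    { unfold Zz. field. exact Tnz. }
    rewrite P, Q, Rmult_0_r, Rmult_0_l, Rminus_0_r in W.
    assert (He1 : 0 < e1) by apply exp_pos.
    assert (HX : X <> 0) by (apply XN; lra).
    assert (Zz0 : Zz = 0).
    { apply Rmult_integral in W. destruct W as [W|W]; [|exact W]. exfalso.
      apply Rmult_integral in W. destruct W as [W|W]; [|exact (HX W)].
      apply Rmult_integral in W. destruct W; lra. }
    unfold Zz in Zz0. rewrite Er in Zz0.
    assert (M : d * ((E2 - E1) * J1) = Tt ^ 2 * e2 * ((J1 + J2) * k2 - J1 * k1 * R0)) by lra.
    unfold G. fold Tt. fold e2. fold R0.
    assert (NZ : (E2 - E1) * J1 <> 0) by (apply Rmult_integral_contrapositive; split; lra).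
    replace (Tt ^ 2 / ((E2 - E1) * J1) * e2 * ((J1 + J2) * k2 - J1 * k1 * R0)) with
      (Tt ^ 2 * e2 * ((J1 + J2) * k2 - J1 * k1 * R0) / ((E2 - E1) * J1)) by (field; split; lra).
    rewrite <- M. field. split; lra. }
  assert (TR : forall t, 0 < t < r -> trig J1 J2 k1 k2 h E1 E2 Ts (T t)).
  { intros t Ht. destruct (INV t ltac:(lra)) as [[a1 _] [[b1 _] [HT1 _]]].
    assert (Q := TD t Ht). unfold f_T in Q. unfold trig.
    replace (T t ^ 2 / ((E2 - E1) * J1 * h) * exp (- E2 / T t) *
       ((J1 + J2) * k2 - J1 * k1 * exp ((E2 - E1) / T t)))
      with (G J1 J2 k1 k2 E1 E2 (T t) / h) by (unfold G; field; repeat split; lra).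
    rewrite <- Q.
    assert (P1 : 0 < J1 * k1 * exp (- E1 / T t) * cA t)
      by (repeat apply Rmult_lt_0_compat; try apply exp_pos; lra).
    assert (P2 : 0 < J2 * k2 * exp (- E2 / T t) * cB t)
      by (repeat apply Rmult_lt_0_compat; try apply exp_pos; lra).
    assert (S : 0 < (J1 * k1 * exp (- E1 / T t) * cA t + J2 * k2 * exp (- E2 / T t) * cB t) / h)
      by (apply Rdiv_lt_0_compat; lra).
    replace ((J1 * k1 * exp (- E1 / T t) * cA t + J2 * k2 * exp (- E2 / T t) * cB t + h * (Ts - T t)) / h)
      with ((J1 * k1 * exp (- E1 / T t) * cA t + J2 * k2 * exp (- E2 / T t) * cB t) / h + (Ts - T t))
      by (field; lra).
    lra. }
  assert (ar : Tmax - Tmin <= a * r).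
  { apply (Rmult_le_compat_l a) in Hra; [|lra]. field_simplify in Hra; lra. }
  assert (DT : forall t, 0 < t <= r -> is_derive T t (f_T J1 J2 k1 k2 h E1 E2 Ts (cA t) (cB t) (T t)))
    by (intros t Ht; apply Hd; lra).
  destruct (INV r ltac:(lra)) as [_ [_ [Tr1 Tr2]]].
  destruct I1 as [_ [_ [T01 T02]]].
  destruct Hc as [Hc|Hc].
  - assert (B := barrier (fun t => -1 * T t + - a * t)
       (fun t => -1 * f_T J1 J2 k1 k2 h E1 E2 Ts (cA t) (cB t) (T t) + - a * 1) 0 r Hr (rc_lin T _ _ rT)
       (fun u Hu => D_plus _ _ u _ _ (is_derive_scal _ u (-1) _ (DT u Hu)) (is_derive_scal _ u (- a) _ (D_id u)))
       ltac:(intros u Hu; destruct (INV u ltac:(lra)) as [_ [_ HT]];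
             assert (Q := Hc (T u) HT (TR u Hu)); rewrite (TD u Hu); lra)).
    cbv beta in B. rewrite (Rmult_0_l r), exp_0 in B. lra.
  - assert (B := barrier (fun t => 1 * T t + - a * t)
       (fun t => 1 * f_T J1 J2 k1 k2 h E1 E2 Ts (cA t) (cB t) (T t) + - a * 1) 0 r Hr (rc_lin T _ _ rT)
       (fun u Hu => D_plus _ _ u _ _ (is_derive_scal _ u 1 _ (DT u Hu)) (is_derive_scal _ u (- a) _ (D_id u)))
       ltac:(intros u Hu; destruct (INV u ltac:(lra)) as [_ [_ HT]];
             assert (Q := Hc (T u) HT (TR u Hu)); rewrite (TD u Hu); lra)).
    cbv beta in B. rewrite (Rmult_0_l r), exp_0 in B. lra.
Qed.
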